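(* Assume the Richardson limit shape $\mathcal{S}$ is uniformly curved, and let $z,r,\delta,\beta,\alpha$ and the sets $\mathcal{R}_0^n,\mathcal{B}_0^n,\mathcal{R}_1^n$ be as defined in the context. Then for all sufficiently large $n$ and all $x\in\mathcal{R}_1^n$, \[d(x,\mathcal{R}_0^n)+4(\delta n)^\beta<d(x,\mathcal{B}_0^n).\]
   Context: $\mathcal{S}$ is the limit shape of the Richardson model on $\mathbb{Z}^d$ (each unoccupied site becomes occupied at rate equal to its number of occupied neighbours): the nonrandom compact convex set with nonempty interior such that for every finite nonempty initial set and $\epsilon>0$, a.s. $(1-\epsilon)\mathcal{S}\subseteq\hat Z(s)/s\subseteq(1+\epsilon)\mathcal{S}$ for large $s$, $\hat Z=\{x:\operatorname{dist}_\infty(x,Z)\le1/2\}$. Uniformly curved: there is $\varrho<\infty$ such that each $z\in\partial\mathcal{S}$ lies on the boundary of a Euclidean ball of radius $\varrho$ containing $\mathcal{S}$. Richardson norm $|x|=\inf\{t>0:x\in t\mathcal{S}\}$, metric $d(x,y)=|x-y|$, $d(x,A)=\inf_{y\in A}d(x,y)$, $\pi x=x/|x|$. $D(x;\rho)=\{y:d(x,y)\le\rho\}$, $D(x;\rho_1,\rho_2)=D(x;\rho_2)\setminus D(x;\rho_1)$. Angular sector: $\mathcal{A}(z;\varrho)=\{y\ne0:d(\pi y,z)<\varrho\}$ for $z\in\partial\mathcal{S}$. Fix $z\in\partial\mathcal{S}$, $r>0$, $\delta\in(0,1)$, $\beta\in(1/2,1)$, $\alpha\in(1/2,1)$ with $(\beta+1)/2<\alpha$;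 for $n\ge1$, $A_1=\mathcal{A}(z;r)$, $A_2=\mathcal{A}(z;r+n^{\alpha-1})$, $\mathcal{R}_0^n=D(0;n/(1+\delta),n-n^\beta)\cap A_2\cap\mathbb{Z}^d$, $\mathcal{B}_0^n=(D(0;n/(1+\delta))\cup(D(0;n/(1+\delta),n+n^\beta)\cap A_2^c))\cap\mathbb{Z}^d$, $\mathcal{R}_1^n=D(0;n,n(1+\delta)-(n+\delta n)^\beta)\cap A_1\cap\mathbb{Z}^d$. *)

(* Defs.v *)
From HB Require Import structures.
From mathcomp Require Import all_boot all_order all_algebra all_fingroup.
From mathcomp Require Import all_classical all_reals all_analysis.
Import numFieldNormedType.Exports.
Set Implicit Arguments. Unset Strict Implicit. Unset Printing Implicit Defensive.
Import Order.TTheory GRing.Theory Num.Theory.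
Local Open Scope classical_set_scope.
Local Open Scope ring_scope.

Section RichardsonGeometry.
Variables (R : realType) (d : nat).
Local Notation V := 'rV[R]_d.

Definition enorm (x : V) : R := Num.sqrt (\sum_(i < d) x ord0 i ^+ 2).
Definition eball (c : V) (rho : R) : set V := [set y | enorm (y - c) <= rho].

Definition bdry (S : set V) : set V := closure S `\` interior S.

Definition convex_set_pt (S : set V) : Prop :=
  forall x y, S x -> S y -> forall t : R, 0 <= t <= 1 -> S (t *: x + (1 - t) *: y).

(** Invariance under the symmetries of Z^d (coordinate permutations and sign changes). *)
Definition lattice_symmetric (S : set V) : Prop :=
  forall (s : 'S_d) (sg : 'I_d -> bool) (x : V),
    S x -> S (\row_i ((-1) ^+ sg i * x ord0 (s i))).

(** Geometric properties of the Richardson limit shape used as standing assumptions: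
    a nonrandom compact convex set, containing 0 in its interior, invariant under
    the lattice symmetries. *)
Definition richardson_shape (S : set V) : Prop :=
  [/\ compact S, convex_set_pt S, interior S 0 & lattice_symmetric S].

Definition uniformly_curved (S : set V) : Prop :=
  exists2 rho : R, 0 < rho &
    forall z, bdry S z -> exists c : V, enorm (z - c) = rho /\ S `<=` eball c rho.

Definition rnorm (S : set V) (x : V) : R :=
  inf [set t : R | 0 < t /\ exists2 s, S s & x = t *: s].
Definition rdist (S : set V) (x y : V) : R := rnorm S (x - y).
Definition rdist_set (S : set V) (x : V) (A : set V) : R :=
  inf [set rdist S x y | y in A].
Definition rproj (S : set V) (y : V) : V := (rnorm S y)^-1 *: y.

Definition Dball (S : set V) (x : V) (rho : R) : set V := [set y | rdist S x y <= rho].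
Definition Dann (S : set V) (x : V) (rho1 rho2 : R) : set V :=
  Dball S x rho2 `\` Dball S x rho1.
Definition sector (S : set V) (z : V) (rho : R) : set V :=
  [set y | y != 0 /\ rdist S (rproj S y) z < rho].
Definition lattice : set V := [set x | forall i, x ord0 i \is a Num.int].

Definition R0set (S : set V) (z : V) (r del bet alp : R) (n : nat) : set V :=
  Dann S 0 (n%:R / (1 + del)) (n%:R - n%:R `^ bet)
  `&` sector S z (r + n%:R `^ (alp - 1)) `&` lattice.

Definition B0set (S : set V) (z : V) (r del bet alp : R) (n : nat) : set V :=
  (Dball S 0 (n%:R / (1 + del))
   `|` (Dann S 0 (n%:R / (1 + del)) (n%:R + n%:R `^ bet)
        `&` ~` sector S z (r + n%:R `^ (alp - 1))))
  `&` lattice.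

Definition R1set (S : set V) (z : V) (r del bet : R) (n : nat) : set V :=
  Dann S 0 n%:R (n%:R * (1 + del) - (n%:R + del * n%:R) `^ bet)
  `&` sector S z r `&` lattice.

End RichardsonGeometry.

(* Main.v *)
Require Import Defs.
From HB Require Import structures.
From mathcomp Require Import all_boot all_order all_algebra all_fingroup.
From mathcomp Require Import all_classical all_reals all_analysis.
From mathcomp.algebra_tactics Require Import ring lra.
Import numFieldNormedType.Exports.
Import Order.TTheory GRing.Theory Num.Theory.
Local Open Scope classical_set_scope.
Local Open Scope ring_scope.
Set Implicit Arguments. Unset Strict Implicit. Unset Printing Implicit Defensive.

Section Quad.
Variables (R : realType) (d : nat).
Local Notation V := 'rV[R]_d.
Implicit Types (u v a b : V).

Definition Qf (u : V) : R := \sum_(i < d) u ord0 i ^+ 2.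
Definition ipf (u v : V) : R := \sum_(i < d) u ord0 i * v ord0 i.

Lemma Qf_ge0 u : 0 <= Qf u.
Proof. by apply: sumr_ge0 => i _; rewrite sqr_ge0. Qed.

Lemma Qf_eq0 u : Qf u = 0 -> u = 0.
Proof.
move=> /eqP; rewrite psumr_eq0; last by move=> i _; rewrite sqr_ge0.
move=> /allP H; apply/rowP => i; rewrite mxE.
by have /(_ (mem_index_enum i)) := H i => /implyP /(_ isT); rewrite sqrf_eq0 => /eqP.
Qed.

Lemma Qf_coord u i : u ord0 i ^+ 2 <= Qf u.
Proof.
rewrite /Qf (bigD1 i) //= lerDl; by apply: sumr_ge0 => j _; rewrite sqr_ge0.
Qed.

Lemma ipfDl a b v : ipf (a + b) v = ipf a v + ipf b v.
Proof. by rewrite /ipf -big_split /=; apply: eq_bigr => i _; rewrite mxE mulrDl. Qed.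

Lemma ipfZl c a v : ipf (c *: a) v = c * ipf a v.
Proof. by rewrite /ipf mulr_sumr; apply: eq_bigr => i _; rewrite mxE mulrA. Qed.

Lemma ipfNl a v : ipf (- a) v = - ipf a v.
Proof. by rewrite -scaleN1r ipfZl mulN1r. Qed.

Lemma ipfBl a b v : ipf (a - b) v = ipf a v - ipf b v.
Proof. by rewrite ipfDl ipfNl. Qed.

Lemma ipf0l v : ipf 0 v = 0.
Proof. by rewrite /ipf big1 // => i _; rewrite mxE mul0r. Qed.

Lemma QfD a b : Qf (a + b) = Qf a + 2 * ipf a b + Qf b.
Proof.
rewrite /Qf /ipf mulr_sumr -!big_split /=; apply: eq_bigr => i _; rewrite mxE; ring.
Qed.

Lemma QfZ c a : Qf (c *: a) = c ^+ 2 * Qf a.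
Proof. by rewrite /Qf mulr_sumr; apply: eq_bigr => i _; rewrite mxE exprMn. Qed.

Lemma ipf_le a b : 2 * ipf a b <= Qf a + Qf b.
Proof.
rewrite /Qf /ipf mulr_sumr -big_split /=; apply: ler_sum => i _.
have := sqr_ge0 (a ord0 i - b ord0 i); nra.
Qed.

Lemma QfD_le a b : Qf (a + b) <= 2 * Qf a + 2 * Qf b.
Proof. rewrite QfD; have := ipf_le a b; lra. Qed.

Lemma enormE u : enorm u = Num.sqrt (Qf u).
Proof. by []. Qed.

End Quad.

Lemma coord_le (R : realType) d (a : 'rV[R]_d) j : `|a ord0 j| <= Qf a + 1.
Proof.
have h := Qf_coord a j; have h2 := normr_ge0 (a ord0 j).
have h3 : `|a ord0 j| ^+ 2 = a ord0 j ^+ 2 by rewrite real_normK ?num_real.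
nra.
Qed.

Lemma ball_rV (R : realType) d (p q : 'rV[R]_d) (e : R) : 0 < e ->
  (forall j, `|p ord0 j - q ord0 j| < e) -> ball p e q.
Proof.
move=> e0 H; split=> // i j; rewrite (ord1 i) -ball_normE /=; exact: H.
Qed.

Section Norm.
Variables (R : realType) (d : nat).
Local Notation V := 'rV[R]_d.
Implicit Types (u v a b : V) (t : R).
Variables (S : set V) (eps : R).
Hypothesis eps_gt0 : 0 < eps.
Hypothesis Hball : forall u, (forall i, `|u ord0 i| < eps) -> S u.
Hypothesis Hconv : convex_set_pt S.
Hypothesis Hsym : forall u, S u -> S (- u).

Definition Tset u := [set t : R | 0 < t /\ exists2 s, S s & u = t *: s].

Lemma S0 : S 0.
Proof. by apply: Hball => i; rewrite mxE normr0. Qed.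

Lemma T_lb u : has_lbound (Tset u).
Proof. by exists 0 => t [/ltW]. Qed.

Lemma rnorm_le u t : Tset u t -> rnorm S u <= t.
Proof. by move=> Ht; have := ge_inf (T_lb u); apply. Qed.

Lemma T_up u t (t' : R) : Tset u t -> t <= t' -> Tset u t'.
Proof.
move=> [t0 [s Ss ->]] tt'; have t'0 : 0 < t' by apply: (lt_le_trans t0 tt').
split=> //; exists ((t / t') *: s + (1 - t / t') *: 0).
  apply: Hconv => //; first exact: S0.
  by apply/andP; split; [rewrite divr_ge0 // ltW | rewrite ler_pdivrMr // mul1r].
by rewrite scaler0 addr0 scalerA mulrCA divff ?gt_eqF // mulr1.
Qed.

Lemma Lup u t : 0 < t -> Qf u < (eps * t) ^+ 2 -> Tset u t.
Proof.
move=> t0 Hq; split=> //; exists (t^-1 *: u); last first.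
  by rewrite scalerA divff ?gt_eqF // scale1r.
apply: Hball => i; rewrite mxE.
have h1 := Qf_coord u i.
have ha : `|u ord0 i| < eps * t.
  have h2 : `|u ord0 i| ^+ 2 < (eps * t) ^+ 2 by rewrite real_normK ?num_real // (le_lt_trans h1).
  have h3 := normr_ge0 (u ord0 i); have h4 : 0 < eps * t by rewrite mulr_gt0.
  nra.
by rewrite normrM ger0_norm ?invr_ge0 ?ltW // mulrC ltr_pdivrMr.
Qed.


Lemma T_ne u : Tset u !=set0.
Proof.
have hq := Qf_ge0 u.
exists ((Qf u + 1) / eps); apply: Lup; first by rewrite divr_gt0 // ltr_pwDr.
rewrite mulrC divfK ?gt_eqF //; nra.
Qed.

Lemma rnorm_ge0 u : 0 <= rnorm S u.
Proof. by apply: lb_le_inf; [exact: T_ne | move=> t [/ltW]]. Qed.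

Lemma T_lt u t : rnorm S u < t -> Tset u t.
Proof.
move=> ht; have h1 : 0 < t - rnorm S u by rewrite subr_gt0.
have [e Te lte] := inf_adherent h1 (conj (T_ne u) (T_lb u)).
by apply: (T_up Te); move: lte; rewrite /rnorm addrC subrK => /ltW.
Qed.

Lemma scale_le a b (k : R) : 0 < k -> (forall t, Tset b t -> Tset a (k * t)) ->
  rnorm S a <= k * rnorm S b.
Proof.
move=> k0 H; apply/ler_addgt0Pr => e e0.
have /H Ht : Tset b (rnorm S b + e / k).
  by apply: T_lt; rewrite ltrDl divr_gt0.
by have := rnorm_le Ht; rewrite mulrDr mulrCA divff ?gt_eqF // mulr1.
Qed.

Lemma rnormZp (c : R) u : 0 < c -> rnorm S (c *: u) = c * rnorm S u.
Proof.
move=> c0; apply/eqP; rewrite eq_le; apply/andP; split.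
  apply: scale_le => // t [t0 [s Ss ->]]; split; first by rewrite mulr_gt0.
  by exists s => //; rewrite scalerA.
rewrite -ler_pdivlMl //; apply: scale_le; first by rewrite invr_gt0.
move=> t [t0 [s Ss e]]; split; first by rewrite mulr_gt0 ?invr_gt0.
by exists s => //; rewrite -scalerA -e scalerA mulVf ?gt_eqF // scale1r.
Qed.

Lemma rnorm0 : rnorm S (0 : V) = 0.
Proof.
apply/eqP; rewrite eq_le rnorm_ge0 andbT; apply/ler_addgt0Pr => e e0.
rewrite add0r; apply: rnorm_le; split=> //; exists 0; first exact: S0.
by rewrite scaler0.
Qed.

Lemma rnormN u : rnorm S (- u) = rnorm S u.
Proof.
apply/eqP; rewrite eq_le; apply/andP; split; rewrite -[X in _ <= X]mul1r;
  apply: scale_le => // t [t0 [s Ss e]]; rewrite mul1r; split=> //;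
  exists (- s); try exact: Hsym.
- by rewrite e scalerN.
- by rewrite -[u]opprK e scalerN.
Qed.

Lemma rnormZ (c : R) u : rnorm S (c *: u) = `|c| * rnorm S u.
Proof.
have [c0|c0|->] := ltrgtP c 0.
- have -> : c *: u = (- c) *: (- u) by rewrite scaleNr scalerN opprK.
  by rewrite rnormZp ?oppr_gt0 // rnormN ltr0_norm.
- by rewrite rnormZp // gtr0_norm.
- by rewrite scale0r rnorm0 normr0 mul0r.
Qed.

Lemma rnormD a b : rnorm S (a + b) <= rnorm S a + rnorm S b.
Proof.
apply/ler_addgt0Pr => e e0.
have /T_lt [ta [s Ss ea]] : rnorm S a < rnorm S a + e / 2 by rewrite ltrDl divr_gt0.
have /T_lt [tb [s' Ss' eb]] : rnorm S b < rnorm S b + e / 2 by rewrite ltrDl divr_gt0.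
set A := rnorm S a + e / 2 in ta ea *; set B := rnorm S b + e / 2 in tb eb *.
have AB0 : 0 < A + B by rewrite addr_gt0.
have -> : rnorm S a + rnorm S b + e = A + B by rewrite /A /B; field.
apply: rnorm_le; split=> //.
exists ((A / (A + B)) *: s + (1 - A / (A + B)) *: s').
  apply: Hconv => //; apply/andP; split; first by rewrite divr_ge0 // ltW.
  by rewrite ler_pdivrMr // mul1r lerDl ltW.
rewrite scalerDr !scalerA ea eb; congr (_ *: _ + _ *: _); field; exact: lt0r_neq0.
Qed.

Lemma rnormB a b : rnorm S (a - b) <= rnorm S a + rnorm S b.
Proof. by rewrite -(rnormN b) rnormD. Qed.

Lemma rnorm_up u t : 0 < t -> Qf u < (eps * t) ^+ 2 -> rnorm S u <= t.
Proof. by move=> t0 h; apply: rnorm_le; apply: Lup. Qed.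

Lemma rnorm_Qlow u : (eps * rnorm S u) ^+ 2 <= Qf u.
Proof.
rewrite leNgt; apply/negP => hq.
have r0 := rnorm_ge0 u; have hQ := Qf_ge0 u.
have hs : Num.sqrt (Qf u) < eps * rnorm S u.
  have := hq; rewrite -ltr_sqrt; last by rewrite (le_lt_trans hQ).
  by rewrite sqrtr_sqr ger0_norm // mulr_ge0 // ltW.
have hs0 := sqrtr_ge0 (Qf u).
set t := (Num.sqrt (Qf u) / eps + rnorm S u) / 2.
have ht0 : 0 < t.
  have rp : 0 < rnorm S u.
    rewrite lt_neqAle r0 andbT; apply/negP => /eqP r00.
    by move: hs; rewrite -r00 mulr0 ltNge hs0.
  have : 0 <= Num.sqrt (Qf u) / eps by rewrite divr_ge0 // ltW.
  rewrite /t; lra.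
have : rnorm S u <= t.
  apply: rnorm_up => //.
  have h1 : Num.sqrt (Qf u) < eps * t.
    rewrite /t mulrA mulrDr mulrCA divff ?gt_eqF // mulr1; lra.
  have e0 : 0 < eps * t by rewrite mulr_gt0.
  rewrite -ltr_sqrt; last by rewrite exprn_gt0.
  by rewrite sqrtr_sqr ger0_norm // ltW.
have hs' : Num.sqrt (Qf u) / eps < rnorm S u by rewrite ltr_pdivrMr // mulrC.
rewrite /t; lra.
Qed.

Variable B0 : R.
Hypothesis HB : forall w, S w -> Qf w <= B0.
Hypothesis Hcl : closed S.
Variable rho : R.
Hypothesis rho_gt0 : 0 < rho.
Hypothesis Hcurv : forall p, bdry S p ->
  exists c : V, enorm (p - c) = rho /\ S `<=` eball c rho.

Local Notation rn := (rnorm S).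

Lemma Qf_gt0 u : u != 0 -> 0 < Qf u.
Proof.
move=> u0; rewrite lt_neqAle Qf_ge0 andbT; apply/negP => /eqP/esym/Qf_eq0.
by move/eqP: u0.
Qed.

Lemma rnorm_gt0 u : u != 0 -> 0 < rn u.
Proof.
move=> u0; have r0 := rnorm_ge0 u.
rewrite lt_neqAle r0 andbT; apply/negP => /eqP r00.
have Qp := Qf_gt0 u0.
set t := Qf u / (Qf u + `|B0| + 1).
have hden : 0 < Qf u + `|B0| + 1 by have := normr_ge0 B0; lra.
have t0 : 0 < t by rewrite divr_gt0.
have ht : t * (Qf u + `|B0| + 1) = Qf u by rewrite /t divfK ?gt_eqF.
have [_ [s Ss eu]] : Tset u t.
  by apply: T_lt; rewrite -r00.
have hQ : Qf u = t ^+ 2 * Qf s by rewrite eu QfZ.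
have hs := HB Ss; have hB := ler_norm B0; have hn := normr_ge0 B0.
have t1 : t < 1.
  have : t * (Qf u + `|B0| + 1) < 1 * (Qf u + `|B0| + 1) by rewrite ht mul1r; lra.
  by rewrite ltr_pM2r.
have hQs := Qf_ge0 s.
have h1 : t ^+ 2 * Qf s <= t ^+ 2 * `|B0|.
  by rewrite ler_pM2l ?exprn_gt0 //; apply: le_trans hB.
have h2 : t ^+ 2 * `|B0| <= t * `|B0| by rewrite ler_pM2r ?expr2; nra.
nra.
Qed.

Lemma rproj_scale u : u = rn u *: rproj S u.
Proof.
have [->|u0] := eqVneq u 0; first by rewrite /rproj !scaler0.
by rewrite /rproj scalerA divff ?gt_eqF ?rnorm_gt0 // scale1r.
Qed.

Lemma rnorm_rproj u : u != 0 -> rn (rproj S u) = 1.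
Proof.
move=> u0; rewrite /rproj rnormZ ger0_norm.
  by rewrite mulVf // gt_eqF // rnorm_gt0.
by rewrite invr_ge0 rnorm_ge0.
Qed.

Lemma rproj_closure u : u != 0 -> closure S (rproj S u).
Proof.
move=> u0 P /nbhs_ballP [e /= e0 HP].
have r0 := rnorm_gt0 u0; set r := rn u in r0 *.
set M := Qf u + 1.
have M0 : 0 < M by rewrite /M ltr_pwDr // Qf_ge0.
set eta := e * r ^+ 2 / (M + 1).
have eta0 : 0 < eta by rewrite /eta divr_gt0 ?mulr_gt0 ?exprn_gt0 // ltr_wpDr.
have [_ [s Ss es]] : Tset u (r + eta).
  by apply: T_lt; rewrite ltrDl.
exists s; split=> //; apply: HP; apply: ball_rV => // j.
have -> : s = (r + eta)^-1 *: u by rewrite es scalerA mulVf ?scale1r // gt_eqF // addr_gt0.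
rewrite /rproj !mxE -/r -mulrBl normrM.
have rt : 0 < r + eta by rewrite addr_gt0.
have -> : r^-1 - (r + eta)^-1 = eta / (r * (r + eta)).
  by field; apply/andP; split; apply: lt0r_neq0.
rewrite ger0_norm ?divr_ge0 ?mulr_ge0 ?ltW //.
have hx := coord_le u j; rewrite -/M in hx.
have h1 : eta / (r * (r + eta)) <= eta / r ^+ 2.
  rewrite ler_pM2l // lef_pV2 ?posrE ?exprn_gt0 ?mulr_gt0 //.
  by rewrite expr2 ler_pM2l // lerDl ltW.
have h3 : eta / r ^+ 2 = e / (M + 1).
  by rewrite /eta mulrAC mulfK // gt_eqF // exprn_gt0.
have h4 : e / (M + 1) * `|u ord0 j| < e.
  rewrite mulrAC ltr_pdivrMr; last by rewrite ltr_wpDr // ltW.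
  rewrite (ltr_pM2l e0); lra.
apply: le_lt_trans h4; rewrite -h3; exact: ler_wpM2r.
by rewrite ltr_wpDr // ltW.
Qed.


Lemma rproj_S u : u != 0 -> S (rproj S u).
Proof.
move=> u0; have e := proj1 (closure_id S) Hcl.
by move: (rproj_closure u0); rewrite -e.
Qed.

Lemma rproj_neq0 u : u != 0 -> rproj S u != 0.
Proof.
move=> u0; apply/eqP => h; move: (rnorm_rproj u0); rewrite h rnorm0 => /eqP.
by rewrite eq_sym oner_eq0.
Qed.

Lemma rproj_bdry u : u != 0 -> bdry S (rproj S u).
Proof.
move=> u0; split; first exact: rproj_closure.
move=> /nbhs_ballP [e /= e0 HP].
set p := rproj S u.
have r0 := rnorm_gt0 u0; set r := rn u in r0 *.
set eta := e / (Qf p + 2).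
have Q2 : 0 < Qf p + 2 by have := Qf_ge0 p; lra.
have eta0 : 0 < eta by rewrite divr_gt0.
have Sq : S ((1 + eta) *: p).
  apply: HP; apply: ball_rV => // j; rewrite [((1 + eta) *: p) ord0 j]mxE.
  have -> : p ord0 j - (1 + eta) * p ord0 j = - (eta * p ord0 j) by ring.
  rewrite normrN normrM ger0_norm ?ltW //.
  have hx := coord_le p j.
  rewrite /eta mulrAC ltr_pdivrMr //; rewrite (ltr_pM2l e0); lra.
have : Tset u (r / (1 + eta)).
  split; first by rewrite divr_gt0 // addr_gt0.
  exists ((1 + eta) *: p) => //; rewrite scalerA divfK.
    exact: rproj_scale.
  by rewrite gt_eqF // addr_gt0.
move/rnorm_le; rewrite -/r ler_pdivlMr ?addr_gt0 // mulrDr mulr1 gerDl.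
by rewrite leNgt mulr_gt0.
Qed.

Definition Kc := (B0 + rho ^+ 2) / 2.

Lemma QfN u : Qf (- u) = Qf u.
Proof. by rewrite -scaleN1r QfZ sqrrN expr1n mul1r. Qed.

Lemma curv_ineq x y : x != 0 -> y != 0 ->
  rn x - rn y + rn y * Qf (rproj S y - rproj S x) / (2 * Kc) <= rn (x - y).
Proof.
move=> x0 y0; set p := rproj S x.
have [c [hc Hc]] := Hcurv (rproj_bdry x0).
set nu := p - c.
have hnu : Qf nu = rho ^+ 2.
  by move: hc; rewrite enormE /= => <-; rewrite sqr_sqrtr // Qf_ge0.
have Hw : forall w, S w -> 2 * ipf w nu <= 2 * ipf p nu - Qf (w - p).
  move=> w /Hc; rewrite /eball /= enormE => hw.
  have hw2 : Qf (w - c) <= rho ^+ 2.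
    have : Num.sqrt (Qf (w - c)) <= Num.sqrt (rho ^+ 2).
      by rewrite sqrtr_sqr ger0_norm // ltW.
    by rewrite ler_sqrt // exprn_ge0 // ltW.
  have e1 : w - c = (w - p) + nu by rewrite /nu addrA subrK.
  move: hw2; rewrite e1 QfD hnu ipfBl; lra.
have [kap ekap] : {k | k = ipf p nu} by eexists.
rewrite -ekap in Hw.
have p0 := rproj_neq0 x0.
have kap_pos : 0 < kap.
  have := Hw 0 S0; rewrite ipf0l sub0r QfN mulr0 => h.
  have := Qf_gt0 p0; rewrite -/p; lra.
have kapK : kap <= Kc.
  have h1 := ipf_le p nu; have h2 := HB (rproj_S x0).
  rewrite /Kc; move: h1; rewrite hnu -/p -ekap; lra.
have Hu : forall u, ipf u nu <= kap * rn u.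
  move=> u; have [->|u0] := eqVneq u 0; first by rewrite ipf0l rnorm0 mulr0.
  rewrite {1}(rproj_scale u) ipfZl mulrC ler_wpM2r ?rnorm_ge0 //.
  have := Hw _ (rproj_S u0); have := Qf_ge0 (rproj S u - p); lra.
have hx : ipf x nu = rn x * kap by rewrite ekap {1}(rproj_scale x) ipfZl.
set W := rn y * Qf (rproj S y - p).
have hy : 2 * ipf y nu <= 2 * rn y * kap - W.
  rewrite {1}(rproj_scale y) ipfZl /W.
  have := Hw _ (rproj_S y0); have := rnorm_ge0 y.
  set a := ipf (rproj S y) nu; set q := Qf (rproj S y - p); set ry := rn y.
  move=> ha hb; have : ry * (2 * a) <= ry * (2 * kap - q) by rewrite ler_wpM2l.
  lra.
have hxy := Hu (x - y); rewrite ipfBl hx in hxy.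
have W0 : 0 <= W by rewrite mulr_ge0 ?rnorm_ge0 ?Qf_ge0.
have h1 : W / (2 * Kc) <= W / (2 * kap).
  have a1 : 0 < 2 * Kc by lra.
  have a2 : 0 < 2 * kap by lra.
  apply: ler_wpM2l => //; rewrite lef_pV2 ?posrE //; lra.
apply: le_trans (_ : rn x - rn y + W / (2 * kap) <= _); first lra.
rewrite -(ler_pM2l kap_pos) mulrDr.
have -> : kap * (W / (2 * kap)) = W / 2 by field; apply: lt0r_neq0.
lra.
Qed.

Lemma rnorm_rev a b : rn a - rn b <= rn (a - b).
Proof. have := rnormD (a - b) b; rewrite subrK; lra. Qed.

Lemma rnormBC a b : rn (a - b) = rn (b - a).
Proof. by rewrite -rnormN opprB. Qed.

Lemma proj_diff y q : y != 0 -> q != 0 ->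
  rn (rproj S y - rproj S q) <= 2 * rn (y - q) / rn q.
Proof.
move=> y0 q0; have ry := rnorm_gt0 y0; have rq := rnorm_gt0 q0.
have e : rproj S y - rproj S q =
    (rn q)^-1 *: (y - q) + ((rn y)^-1 - (rn q)^-1) *: y.
  by apply/rowP => i; rewrite /rproj !mxE; ring.
rewrite e; apply: le_trans (rnormD _ _) _; rewrite !rnormZ.
have -> : `|(rn y)^-1 - (rn q)^-1| * rn y = `|rn q - rn y| / rn q.
  have -> : (rn y)^-1 - (rn q)^-1 = (rn q - rn y) / (rn y * rn q).
    by field; apply/andP; split; apply: lt0r_neq0.
  rewrite normrM (ger0_norm (x := (rn y * rn q)^-1)); last by rewrite invr_ge0 mulr_ge0 ?ltW.
  by field; apply/andP; split; apply: lt0r_neq0.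
have h1 := rnorm_rev y q; have h2 := rnorm_rev q y; rewrite rnormBC in h2.
have h3 : `|rn q - rn y| <= rn (y - q).
  by rewrite ler_norml; apply/andP; split; lra.
rewrite (ger0_norm (x := (rn q)^-1)); last by rewrite invr_ge0 ltW.
rewrite mulrC -mulrDl ler_pM2r ?invr_gt0 //; lra.

Qed.

Lemma annulus_bound x y : x != 0 -> y != 0 ->
  rn x - rn y + rn y * (eps * rn (rproj S y - rproj S x)) ^+ 2 / (2 * Kc)
    <= rn (x - y).
Proof.
move=> x0 y0; apply: le_trans (curv_ineq x0 y0).
rewrite lerD2l; apply: ler_wpM2r.
  rewrite invr_ge0 mulr_ge0 //; rewrite /Kc divr_ge0 // addr_ge0 ?sqr_ge0 //.
  by apply: le_trans (HB S0); apply: Qf_ge0.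
by apply: ler_wpM2l; [exact: rnorm_ge0 | exact: rnorm_Qlow].
Qed.


Lemma Kc_gt0 : 0 < Kc.
Proof.
rewrite /Kc divr_gt0 // ltr_pwDr ?exprn_gt0 //.
by apply: le_trans (HB S0); apply: Qf_ge0.
Qed.

Definition D0 := (d%:R + 1) / eps.

Lemma D0_gt0 : 0 < D0.
Proof. by rewrite /D0 divr_gt0 // ltr_wpDl. Qed.

Lemma round_ex q : exists y : V, lattice y /\ rn (y - q) <= D0.
Proof.
exists (\row_i ((Num.floor (q ord0 i))%:~R)); split.
  by move=> i; rewrite mxE intr_int.
apply: rnorm_up; first exact: D0_gt0.
rewrite /D0 mulrC divfK ?gt_eqF //.
have h : Qf (\row_i ((Num.floor (q ord0 i))%:~R) - q) <= d%:R.
  have -> : d%:R = \sum_(i < d) (1 : R) by rewrite sumr_const card_ord.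
  apply: ler_sum => i _; rewrite !mxE.
  have := floor_itv (q ord0 i); rewrite intrD.
  set f := (Num.floor (q ord0 i))%:~R; move=> /andP [h1 h2]; nra.
have d0 : 0 <= d%:R :> R by [].
nra.
Qed.

Lemma lb_set (x : V) (A : set V) : has_lbound [set rdist S x y | y in A].
Proof. by exists 0 => e [y _ <-]; apply: rnorm_ge0. Qed.

Lemma rdist0l y : rdist S 0 y = rn y.
Proof. by rewrite /rdist sub0r rnormN. Qed.

Lemma main_bound (z : V) (r del bet alp : R) (n : nat) (x : V) :
  0 < del ->
  let nr := n%:R in
  0 < nr ->
  nr `^ bet + 2 * D0 + 4 * (del * nr) `^ bet + 1 <= nr - nr / (1 + del) ->
  2 * D0 <= nr `^ (alp - 1) * (nr / (1 + del)) ->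
  2 * nr `^ bet + 2 * D0 + 4 * (del * nr) `^ bet + 1 <=
     (nr / (1 + del)) * (eps * nr `^ (alp - 1)) ^+ 2 / (2 * Kc) ->
  R1set S z r del bet n x ->
  rdist_set S x (R0set S z r del bet alp n) + 4 * (del * n%:R) `^ bet
        < rdist_set S x (B0set S z r del bet alp n).
Proof.
move=> del0 nr nr0 C3 C2 C4 [[[hx2 hx1] [x0 hsec]] _].
rewrite /Dball /= rdist0l in hx1; move/negP: hx1; rewrite -ltNge => hX.
set X := rn x in hX.
have nb0 := powR_ge0 nr bet; have nd0 := powR_ge0 (del * nr) bet.
have na0 := powR_ge0 nr (alp - 1).
have D00 := D0_gt0.
have hd : 0 < 1 + del by lra.
have nn0 : 0 <= nr / (1 + del) by rewrite divr_ge0 ?ltW.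
have [L eL] : {L | L = nr - nr `^ bet - D0} by eexists.
have hL : nr / (1 + del) < L - D0 by lra.
have L0 : 0 < L by lra.
have X0 : 0 < X by lra.
set q := (L / X) *: x.
have rq : rn q = L by rewrite /q rnormZ ger0_norm ?divr_ge0 ?ltW // divfK // gt_eqF.
have [y [ly hyq]] := round_ex q.
have ry1 : rn y <= L + D0.
  have := rnormD q (y - q); rewrite addrC subrK rq; lra.
have ry2 : L - D0 <= rn y.
  have := rnorm_rev q y; rewrite rq rnormBC; lra.
have y0 : y != 0.
  by apply/eqP => e; move: ry2; rewrite e rnorm0; lra.
have q0 : q != 0.
  by apply/eqP => e; move: rq; rewrite e rnorm0; lra.
have pq : rproj S q = rproj S x.
  rewrite /rproj rq /q scalerA; congr (_ *: _).
  by rewrite -/X; field; apply/andP; split; apply: lt0r_neq0.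
have hpd : rn (rproj S y - rproj S x) <= nr `^ (alp - 1).
  rewrite -pq; apply: le_trans (proj_diff y0 q0) _; rewrite rq.
  rewrite ler_pdivrMr //.
  apply: le_trans (_ : 2 * D0 <= _); first lra.
  apply: le_trans C2 _; apply: ler_wpM2l => //; lra.
have yR0 : R0set S z r del bet alp n y.
  split; last exact: ly.
  split; split.
  - by rewrite /Dball /= rdist0l -/nr; lra.
  - by rewrite /Dball /= rdist0l -/nr; lra.
  - exact: y0.
  - rewrite /rdist -/nr.
    have := rnormD (rproj S y - rproj S x) (rproj S x - z).
    by rewrite addrA subrK; rewrite /rdist in hsec; lra.
have hxy : rn (x - y) <= X - L + D0.
  have e : x - y = (1 - L / X) *: x + (q - y).
    by rewrite /q scalerBl scale1r addrA subrK.
  rewrite e; apply: le_trans (rnormD _ _) _; rewrite rnormZ rnormBC.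
  rewrite ger0_norm; last by rewrite subr_ge0 ler_pdivrMr // mul1r; lra.
  rewrite mulrBl mul1r divfK ?gt_eqF //; lra.
have up : rdist_set S x (R0set S z r del bet alp n) <= X - L + D0.
  apply: le_trans hxy; apply: (ge_inf (lb_set x _)); exists y => //.
set W := X - L + D0 + 4 * (del * nr) `^ bet + 1.
have lo : W <= rdist_set S x (B0set S z r del bet alp n).
  apply: lb_le_inf.
    exists (rdist S x 0), 0 => //; split; last by move=> i; rewrite mxE.
    by left; rewrite /Dball /= rdist0l rnorm0.
  move=> e [w [hw _] <-]; rewrite /rdist.
  case: hw => [hb | [[hb1 hb2] hs]].
  - rewrite /Dball /= rdist0l in hb.
    have := rnorm_rev x w; rewrite /W; lra.
  - rewrite /Dball /= rdist0l in hb1 hb2; move/negP: hb2; rewrite -ltNge => hb2.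
    have w0 : w != 0 by apply/eqP => e0; move: hb2; rewrite e0 rnorm0; lra.
    have hs' : r + nr `^ (alp - 1) <= rn (rproj S w - z).
      by rewrite leNgt; apply/negP => h; apply: hs; split.
    have hg : nr `^ (alp - 1) <= rn (rproj S w - rproj S x).
      have := rnormD (rproj S w - rproj S x) (rproj S x - z).
      by rewrite addrA subrK; rewrite /rdist in hsec; lra.
    have hab := annulus_bound x0 w0; rewrite -/X in hab.
    set g := rn (rproj S w - rproj S x) in hg hab.
    have h1 : (nr / (1 + del)) * (eps * nr `^ (alp - 1)) ^+ 2 <=
              rn w * (eps * g) ^+ 2.
      apply: ler_pM => //; first by rewrite sqr_ge0.
        exact: ltW.
      have e1 : 0 <= eps * nr `^ (alp - 1) by rewrite mulr_ge0 // ltW.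
      have e2 : eps * nr `^ (alp - 1) <= eps * g by rewrite ler_pM2l.
      rewrite !expr2; exact: ler_pM.
    have h2 : (nr / (1 + del)) * (eps * nr `^ (alp - 1)) ^+ 2 / (2 * Kc) <=
              rn w * (eps * g) ^+ 2 / (2 * Kc).
      by apply: ler_wpM2r => //; rewrite invr_ge0 mulr_ge0 // ltW // Kc_gt0.
    rewrite /W; lra.
move: lo; rewrite /W -/nr => lo; lra.
Qed.
End Norm.

Lemma event_le (R : realType) (e g a c : R) : 0 <= e -> e < g -> 0 < c -> 0 <= a ->
  exists N : nat, forall n : nat, (N <= n)%N -> a * n%:R `^ e <= c * n%:R `^ g.
Proof.
move=> e0 eg c0 a0.
have h0 : 0 < g - e by rewrite subr_gt0.
set M := a / c + 1.
have M0 : 0 < M by rewrite /M ltr_pwDr // divr_ge0 // ltW.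
set K := M `^ (g - e)^-1.
exists (Num.trunc K).+1 => n hn.
have hK := truncnS_gt K.
have K0 : 0 <= K := powR_ge0 _ _.
have hnK : K <= n%:R.
  by apply: ltW; apply: lt_le_trans hK _; rewrite ler_nat.
have n0 : 0 < n%:R :> R by apply: le_lt_trans K0 _; apply: lt_le_trans hK _; rewrite ler_nat.
have hM : M <= n%:R `^ (g - e).
  have := @ge0_ler_powR R (g - e) (ltW h0) K (n%:R); rewrite !nnegrE => /(_ K0 (ltW n0) hnK).
  by rewrite /K -powRrM mulVf ?gt_eqF // powRr1 // ltW.
have -> : n%:R `^ g = n%:R `^ e * n%:R `^ (g - e).
  by rewrite -powRD ?subrKC //; apply/implyP => _; rewrite gt_eqF.
have pe := powR_ge0 (n%:R : R) e.
rewrite [a * _]mulrC mulrCA; apply: ler_wpM2l => //.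
have : c * M <= c * n%:R `^ (g - e) by rewrite ler_pM2l.
rewrite /M mulrDr mulr1 mulrCA divff ?gt_eqF // mulr1; lra.
Qed.

Lemma event_sum (R : realType) (P Q : nat -> Prop) :
  (exists N, forall n, (N <= n)%N -> P n) -> (exists N, forall n, (N <= n)%N -> Q n) ->
  exists N, forall n, (N <= n)%N -> P n /\ Q n.
Proof.
move=> [N1 H1] [N2 H2]; exists (maxn N1 N2) => n hn; split.
- by apply: H1; apply: leq_trans hn; apply: leq_maxl.
- by apply: H2; apply: leq_trans hn; apply: leq_maxr.
Qed.

Lemma powR_nat_split (R : realType) (x a b : R) : 0 < x -> x `^ (a + b) = x `^ a * x `^ b.
Proof. by move=> x0; rewrite powRD //; apply/implyP => _; rewrite gt_eqF. Qed.

Unset Implicit Arguments.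

Theorem claim1 (R : realType) (d : nat) (S : set 'rV[R]_d) (z : 'rV[R]_d)
    (r del bet alp : R) :
  richardson_shape S -> uniformly_curved S ->
  bdry S z -> 0 < r -> 0 < del < 1 -> 2^-1 < bet < 1 -> 2^-1 < alp < 1 ->
  (bet + 1) / 2 < alp ->
  exists N : nat, forall n : nat, (N <= n)%N -> (1 <= n)%N ->
    forall x : 'rV[R]_d, R1set S z r del bet n x ->
      rdist_set S x (R0set S z r del bet alp n) + 4 * (del * n%:R) `^ bet
        < rdist_set S x (B0set S z r del bet alp n).
Proof.
move=> [Hcomp Hconv Hint Hsym'] [rho rho0 Hcurv] hz r0 /andP[del0 del1]
  /andP[bet0 bet1] /andP[alp0 alp1] hab.
move: Hint => /nbhs_ballP [e /= e0 He].
have Hball : forall u : 'rV[R]_d, (forall i, `|u ord0 i| < e) -> S u.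
  move=> u hu; apply: He; apply: ball_rV => // j; rewrite mxE sub0r normrN; exact: hu.
have Hsym : forall u, S u -> S (- u).
  move=> u /(Hsym' 1%g (fun _ => true)); congr S; apply/rowP => i.
  by rewrite !mxE perm1 expr1 mulN1r.
have Hcl : closed S by apply: compact_closed => //; apply: norm_hausdorff.
have [c0 [_ Hc0]] := Hcurv z hz.
set B0 := 2 * rho ^+ 2 + 2 * Qf c0.
have HB : forall w, S w -> Qf w <= B0.
  move=> w /Hc0; rewrite /eball /= enormE => hw.
  have hw2 : Qf (w - c0) <= rho ^+ 2.
    have : Num.sqrt (Qf (w - c0)) <= Num.sqrt (rho ^+ 2).
      by rewrite sqrtr_sqr ger0_norm // ltW.
    by rewrite ler_sqrt // exprn_ge0 // ltW.
  have := QfD_le (w - c0) c0; rewrite subrK /B0; lra.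
have [D eD] : {D | D = D0 d e} by eexists.
have [K eK] : {K | K = Kc B0 rho} by eexists.
have D00 : 0 < D by rewrite eD /D0 divr_gt0 // ltr_wpDl.
have S0' : S 0 by apply: Hball => i; rewrite mxE normr0.
have B00 : 0 <= B0 := le_trans (Qf_ge0 0) (HB 0 S0').
have K0 : 0 < K by rewrite eK /Kc divr_gt0 // ltr_wpDl // exprn_gt0.
set bd := del `^ bet.
have bd0 : 0 < bd by rewrite /bd powR_gt0.
set cd := del / (1 + del).
have cd0 : 0 < cd by rewrite /cd divr_gt0 // ltr_wpDl // ltW.
set c4 := e ^+ 2 / ((1 + del) * (2 * K)).
have hd : 0 < 1 + del by lra.
have c40 : 0 < c4.
  apply: divr_gt0; first exact: exprn_gt0.
  by apply: mulr_gt0 => //; apply: mulr_gt0.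
have b0 : 0 <= bet by lra.
have ga : bet < 2 * alp - 1 by lra.
have cd2 : 0 < cd / 2 by rewrite divr_gt0.
have c42 : 0 < c4 / 2 by rewrite divr_gt0.
have p1 : 0 <= 1 + 4 * bd by lra.
have p2 : 0 <= 2 * D + 1 by lra.
have p3 : 0 <= 2 * D by lra.
have p4 : 0 <= 2 + 4 * bd by lra.
have a0 : 0 < alp by lra.
have a1 : 0 < 2 * alp - 1 by lra.
have id0 : 0 < (1 + del)^-1 by rewrite invr_gt0.
have [N1 H1] := event_le b0 bet1 cd2 p1.
have [N2 H2] := event_le (lexx 0) ltr01 cd2 p2.
have [N3 H3] := event_le (lexx 0) a0 id0 p3.
have [N4 H4] := event_le b0 ga c42 p4.
have [N5 H5] := event_le (lexx 0) a1 c42 p2.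
exists (maxn N1 (maxn N2 (maxn N3 (maxn N4 N5)))) => n hn n1 x hx.
rewrite !geq_max in hn; case/and5P: hn => l1 l2 l3 l4 l5.
have h1 := H1 n l1; have h2 := H2 n l2; have h3 := H3 n l3.
have h4 := H4 n l4; have h5 := H5 n l5.
have nr0 : 0 < n%:R :> R by rewrite ltr0n.
have nr0' := ltW nr0.
rewrite powRr0 mulr1 in h2 h3 h5; rewrite powRr1 // in h1 h2.
have eM : (del * n%:R) `^ bet = bd * n%:R `^ bet by rewrite powRM // ltW.
have pb := powR_ge0 (n%:R : R) bet.
apply: (main_bound e0 Hball Hconv Hsym HB Hcl rho0 Hcurv del0 nr0 _ _ _ hx).
- rewrite eM -eD.
  have -> : n%:R - n%:R / (1 + del) = cd * n%:R by rewrite /cd; field; lra.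
  lra.
- have -> : n%:R `^ (alp - 1) * (n%:R / (1 + del)) = (1 + del)^-1 * n%:R `^ alp.
    rewrite -[X in _ * (X / _)](powRr1 nr0') mulrA -powR_nat_split //.
    by rewrite subrK mulrC.
  rewrite -eD; lra.
- rewrite eM -eD -eK.
  have -> : n%:R / (1 + del) * (e * n%:R `^ (alp - 1)) ^+ 2 / (2 * K) =
            c4 * n%:R `^ (2 * alp - 1).
    have -> : 2 * alp - 1 = (alp - 1) + ((alp - 1) + 1) by ring.
    rewrite !powR_nat_split // powRr1 // /c4.
    field; apply/andP; split; apply: lt0r_neq0 => //; apply: mulr_gt0 => //.
  lra.
Qed.
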